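(* For any toric poset $P=P(G,[\omega])$, \[E\big(\hat G^{\mathrm{Hasse}}(P(G,\omega))\big)\subseteq E\big(\hat G^{\mathrm{torHasse}}(P(G,[\omega]))\big)\subseteq E\big(\bar G^{\mathrm{tor}}(P)\big)=\bigcap_{\omega'\in[\omega]}E\big(\bar G(P(G,\omega'))\big),\] where $E(\cdot)$ denotes edge sets.
   Context: Toric poset setup: $G=(V,E)$ finite simple graph, $V=[n]$; $\mathrm{Acyc}(G)$ acyclic orientations; $P(G,\omega)$ the poset given by the transitive closure of $\omega$; $[\omega]$ the class under the equivalence generated by converting a source into a sink; the toric graphic arrangement $\mathcal{A}_{\mathrm{tor}}(H)$ of a graph $H$ on $V$ consists of the hyperplanes $H^{\mathrm{tor}}_{ij}=\{x\in\mathbb{R}^V/\mathbb{Z}^V:x_i\equiv x_j\bmod 1\}$, $\{i,j\}\in E(H)$; its chambers correspond bijectively to classes $[\omega]$, $\omega\in\mathrm{Acyc}(H)$, and $P(G,[\omega])$ is identified with its chamber $c(P)$. For an ordinary poset $Q$: $\hat G^{\mathrm{Hasse}}(Q)$ is its Hasse diagram (edges the cover relations) and $\bar G(Q)$ its transitive closure graph (edges $\{i,j\}$ with $i,j$ comparable). Toric transitive closure $\bar G^{\mathrm{tor}}(P)$: the graph with edge set $E$ together with all $\{i,j\}$ such that $H^{\mathrm{tor}}_{ij}\cap c(P)=\emptyset$. Toric Hasse diagram $\hat G^{\mathrm{torHasse}}(P)$: the unique graph on $V$ such that for every graph $H$ on $V$, $c(P)$ is a chamber of $\mathcal{A}_{\mathrm{tor}}(H)$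 iff $E(\hat G^{\mathrm{torHasse}}(P))\subseteq E(H)\subseteq E(\bar G^{\mathrm{tor}}(P))$ (its existence and uniqueness are known). *)

(* Defs.v *)
From Stdlib Require Import Reals Relations.
From mathcomp Require Import all_boot.
Set Implicit Arguments. Unset Strict Implicit. Unset Printing Implicit Defensive.

Definition simple_graph n (g : rel 'I_n) : Prop :=
  (forall i j, g i j = g j i) /\ (forall i, g i i = false).

Definition orientation n (g : rel 'I_n) (o : rel 'I_n) : Prop :=
  (forall i j, o i j -> g i j) /\
  (forall i j, g i j -> (o i j || o j i)) /\
  (forall i j, ~~ (o i j && o j i)).

(* Strict order of the poset P(G,o): transitive closure of o. *)
Definition plt n (o : rel 'I_n) (i j : 'I_n) : Prop :=
  exists k, o i k /\ connect o k j.

Definition acyclic_orientation n (g o : rel 'I_n) : Prop :=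
  orientation g o /\ forall i, ~ plt o i i.

Definition flip_source n (o o' : rel 'I_n) : Prop :=
  exists v : 'I_n, (forall u, o u v = false) /\
    forall i j, o' i j = (if (i == v) || (j == v) then o j i else o i j).

Definition toric_equiv n (o o' : rel 'I_n) : Prop :=
  clos_refl_sym_trans (rel 'I_n) (@flip_source n) o o'.

Definition covers n (o : rel 'I_n) (i j : 'I_n) : Prop :=
  plt o i j /\ ~ (exists k, plt o i k /\ plt o k j).
Definition hasse_edge n (o : rel 'I_n) (i j : 'I_n) : Prop :=
  covers o i j \/ covers o j i.

Definition comp_edge n (o : rel 'I_n) (i j : 'I_n) : Prop :=
  plt o i j \/ plt o j i.

(* Points of the torus are represented by their lifts x : 'I_n -> R;
   subsets of the torus by Z^n-invariant predicates on R^n. *)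
Definition is_int (r : R) : Prop := exists z : Z, r = IZR z.

Definition congr_torus n (x y : 'I_n -> R) : Prop := forall i, is_int (Rminus (x i) (y i)).

Definition on_hyp n (i j : 'I_n) (x : 'I_n -> R) : Prop := is_int (Rminus (x i) (x j)).

Definition off_arr n (h : rel 'I_n) (x : 'I_n -> R) : Prop :=
  forall i j, h i j -> ~ on_hyp i j x.

(* x and y (in the torus) lie in the same connected component of the complement of A_tor(h):
   there is a continuous path in R^n from x to a lift of y avoiding the (lifted) arrangement.
   (Paths in the torus lift to paths in R^n.) *)
Definition same_chamber n (h : rel 'I_n) (x y : 'I_n -> R) : Prop :=
  exists gam : R -> 'I_n -> R,
    (forall i, continuity (fun t => gam t i)) /\
    gam R0 = x /\ congr_torus (gam R1) y /\
    (forall t, Rle R0 t -> Rle t R1 -> off_arr h (gam t)).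

Definition is_chamber n (h : rel 'I_n) (C : ('I_n -> R) -> Prop) : Prop :=
  exists x, off_arr h x /\ forall y, C y <-> same_chamber h x y.

(* The chamber c(P) of A_tor(G) attached to the toric poset P(G,[o]): the chamber containing
   the points x in [0,1)^V (off A_tor(G)) whose induced orientation (i -> j iff x_i < x_j
   on edges) is o.  Points with this property form a convex set, hence one chamber. *)
Definition toric_chamber n (g o : rel 'I_n) (y : 'I_n -> R) : Prop :=
  exists x : 'I_n -> R,
    (forall i, Rle R0 (x i) /\ Rlt (x i) R1) /\ off_arr g x /\
    (forall i j, g i j -> (o i j <-> Rlt (x i) (x j))) /\
    same_chamber g x y.

Definition tor_closure_edge n (g o : rel 'I_n) (i j : 'I_n) : Prop :=
  g i j \/ (i != j /\ forall y, toric_chamber g o y -> ~ on_hyp i j y).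

Definition is_tor_hasse n (g o K : rel 'I_n) : Prop :=
  simple_graph K /\
  forall H : rel 'I_n, simple_graph H ->
    (is_chamber H (toric_chamber g o) <->
      ((forall i j, K i j -> H i j) /\ (forall i j, H i j -> tor_closure_edge g o i j))).

(* Main.v *)
Require Import Defs.
From Stdlib Require Import Reals Relations Lra Lia ZArith FunctionalExtensionality ClassicalEpsilon Classical.
From mathcomp Require Import all_boot.
Set Implicit Arguments. Unset Strict Implicit. Unset Printing Implicit Defensive.

Lemma conn_step (T : finType) (e : rel T) x y :
  connect e x y -> x = y \/ exists z, e x z /\ connect e z y.
Proof.
move=> /connectP [p]; case: p => [|z p] /= => [_ ->|/andP [exz pz] ->]; first by left.
right; exists z; split => //; apply/connectP; by exists p.
Qed.

Section Comb.
Variable n : nat.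
Variable o : rel 'I_n.

Lemma plt_conn i j : plt o i j -> connect o i j.
Proof. by case=> k [oik ckj]; apply: connect_trans (connect1 oik) ckj. Qed.

Lemma plt_conn_trans i k j : plt o i k -> connect o k j -> plt o i j.
Proof. by case=> m [oim cmk] ckj; exists m; split => //; apply: connect_trans cmk ckj. Qed.

Lemma conn_plt_trans i k j : connect o i k -> plt o k j -> plt o i j.
Proof.
move=> /conn_step [->//|[z [oiz czk]]] pkj.
exists z; split => //; apply: connect_trans czk (plt_conn pkj).
Qed.

Lemma o_plt i j : o i j -> plt o i j.
Proof. by move=> oij; exists j; split. Qed.

Lemma conn_neq_plt i j : connect o i j -> i != j -> plt o i j.
Proof. move=> /conn_step [->|[z [oiz czj]]]; first by rewrite eqxx. by exists z. Qed.

Hypothesis acyc : forall i, ~ plt o i i.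

Definition Tset (A : {set 'I_n}) (k : 'I_n) : {set 'I_n} :=
  [set m | connect o m k || ([exists t in A, connect o t k] && [exists s in A, connect o m s])].

Definition hgt A k := #|Tset A k|.

Lemma hgt_mono (A : {set 'I_n}) u v : (forall t s, t \in A -> s \in A -> ~ plt o t s) ->
  o u v -> (hgt A u < hgt A v)%N.
Proof.
move=> anti ouv; apply: proper_card; apply/properP; split.
  apply/subsetP => m; rewrite !inE => /orP [cmu|/andP [/existsP [t /andP [tA ctu]] H]].
    by rewrite (connect_trans cmu (connect1 ouv)).
  apply/orP; right; rewrite H andbT; apply/existsP; exists t.
  by rewrite tA (connect_trans ctu (connect1 ouv)).
exists v; first by rewrite inE connect0.
rewrite inE negb_or; apply/andP; split.
  apply/negP => cvu; apply: (acyc (i:=u)); exists v; by split.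
apply/negP => /andP [/existsP [t /andP [tA ctu]] /existsP [s /andP [sA cvs]]].
apply: (anti t s tA sA); apply: (conn_plt_trans ctu); exists v; by split.
Qed.

Lemma hgt_pos (A : {set 'I_n}) k : (0 < hgt A k)%N.
Proof. apply/card_gt0P; exists k; by rewrite inE connect0. Qed.

Lemma hgt_le (A : {set 'I_n}) k : (hgt A k <= n)%N.
Proof. apply: leq_trans (max_card _) _; by rewrite card_ord. Qed.

Lemma hgt_eqA (A : {set 'I_n}) i j : i \in A -> j \in A -> hgt A i = hgt A j.
Proof.
move=> iA jA; rewrite /hgt; suff ->: Tset A i = Tset A j by []; apply/setP => m; rewrite !inE.
have ->: [exists t in A, connect o t i] by apply/existsP; exists i; rewrite iA connect0.
have ->: [exists t in A, connect o t j] by apply/existsP; exists j; rewrite jA connect0.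
case cmi: (connect o m i); case cmj: (connect o m j) => //=.
- symmetry; apply/existsP; exists i; by rewrite iA cmi.
- apply/existsP; exists j; by rewrite jA cmj.
Qed.

End Comb.
Local Open Scope R_scope.

Definition samek (a b : R) := exists k : Z, IZR k < a < IZR k + 1 /\ IZR k < b < IZR k + 1.
Definition shiftz n (y : 'I_n -> R) (c : 'I_n -> Z) := fun k => y k + IZR (c k).
Definition Inv n (h : rel 'I_n) (x y : 'I_n -> R) :=
  exists c, forall a b, h a b -> samek (x b - x a) (shiftz y c b - shiftz y c a).

Lemma notint k r : IZR k < r < IZR k + 1 -> ~ is_int r.
Proof.
move=> [h1 h2] [z ez]; subst r; rewrite -plus_IZR in h2.
apply lt_IZR in h1; apply lt_IZR in h2; lia.
Qed.

Lemma is_int_opp r : is_int r -> is_int (- r).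
Proof. by move=> [z ->]; exists (- z)%Z; rewrite opp_IZR. Qed.

Lemma is_int_add r s : is_int r -> is_int s -> is_int (r + s).
Proof. by move=> [z ->] [w ->]; exists (z + w)%Z; rewrite plus_IZR. Qed.

Lemma flr r : exists k, IZR k <= r < IZR k + 1.
Proof.
have [h1 h2] := archimed r; exists (up r - 1)%Z; rewrite minus_IZR; lra.
Qed.

Lemma notint_k r : ~ is_int r -> exists k, IZR k < r < IZR k + 1.
Proof.
move=> nr; have [k [h1 h2]] := flr r; exists k; split => //.
case: h1 => // e; case: nr; by exists k.
Qed.

Lemma k_uniq k k' r : IZR k < r < IZR k + 1 -> IZR k' < r < IZR k' + 1 -> k = k'.
Proof.
move=> [a1 a2] [b1 b2].
have h1: IZR k < IZR (k' + 1) by rewrite plus_IZR; lra.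
have h2: IZR k' < IZR (k + 1) by rewrite plus_IZR; lra.
apply lt_IZR in h1; apply lt_IZR in h2; lia.
Qed.

Lemma samek_trans a b c : samek a b -> samek b c -> samek a c.
Proof.
move=> [k [h1 h2]] [k' [h3 h4]]; have e := k_uniq h2 h3; subst k'.
by exists k.
Qed.

Lemma samek_shift a b m : samek a b -> samek a (b + IZR m) -> samek a (b + IZR m).
Proof. by []. Qed.

Lemma samek_ext a b a' b' : a = a' -> b = b' -> samek a b -> samek a' b'.
Proof. by move=> -> ->. Qed.

Lemma samek_shift2 a b m : samek a b -> samek (a + IZR m) (b + IZR m).
Proof. move=> [k [h1 h2]]; exists (k + m)%Z; rewrite plus_IZR; lra. Qed.

Lemma samek_int a b : samek a b -> ~ is_int b.
Proof. by move=> [k [_ h]]; apply: notint h. Qed.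

Lemma int_small r : is_int r -> -1 < r < 1 -> r = 0.
Proof.
move=> [z ->] [h1 h2]; have h3: IZR (-1) < IZR z by exact: h1.
apply lt_IZR in h2; apply lt_IZR in h3; have -> : z = 0%Z by lia. done.
Qed.

Section SC.
Variable n : nat.

Lemma SC_ge (h : rel 'I_n) x y : Inv h x y -> same_chamber h x y.
Proof.
move=> [c Hc].
exists (fun t k => x k + t * (shiftz y c k - x k)); split; [|split; [|split]].
- by move=> i; rewrite /shiftz; reg.
- by apply: functional_extensionality => k; ring.
- move=> i; exists (c i); rewrite /shiftz; ring.
- move=> t t0 t1 a b hab; have [k [[h1 h2] [h3 h4]]] := Hc a b hab.
  move=> /is_int_opp hi; apply: (notint (k:=k)) hi.
  have e : - (x a + t * (shiftz y c a - x a) - (x b + t * (shiftz y c b - x b))) =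
      (1 - t) * (x b - x a) + t * (shiftz y c b - shiftz y c a) by ring.
  rewrite e; set d1 := x b - x a in h1 h2 *; set d2 := shiftz y c b - shiftz y c a in h3 h4 *.
  have p1 : 0 <= (1 - t) * (d1 - IZR k) by apply: Rmult_le_pos; lra.
  have p2 : 0 <= t * (d2 - IZR k) by apply: Rmult_le_pos; lra.
  have p3 : 0 <= (1 - t) * (IZR k + 1 - d1) by apply: Rmult_le_pos; lra.
  have p4 : 0 <= t * (IZR k + 1 - d2) by apply: Rmult_le_pos; lra.
  case: t0 => t0.
    have p5 : 0 < t * (d2 - IZR k) by apply: Rmult_lt_0_compat; lra.
    have p6 : 0 < t * (IZR k + 1 - d2) by apply: Rmult_lt_0_compat; lra.
    nra.
  subst t; lra.
Qed.

Lemma SC_le (h : rel 'I_n) x y : same_chamber h x y -> Inv h x y.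
Proof.
move=> [gam [gc [g0 [g1 goff]]]].
have cz: forall i, { z : Z | gam 1 i - y i = IZR z }.
  move=> i; apply: constructive_indefinite_description; exact: g1 i.
exists (fun i => proj1_sig (cz i)) => a b hab.
have e1: forall i, shiftz y (fun i => proj1_sig (cz i)) i = gam 1 i.
  move=> i; rewrite /shiftz; case: (cz i) => z /= ez; lra.
rewrite !e1.
set f := fun t => gam t b - gam t a.
have fc : continuity f by rewrite /f; apply: continuity_minus.
have fni : forall t, 0 <= t -> t <= 1 -> ~ is_int (f t).
  move=> t h0 h1 hi; apply: (goff t h0 h1 a b hab); rewrite /on_hyp.
  have -> : gam t a - gam t b = - f t by rewrite /f; ring.
  exact: is_int_opp.
have [k hk] : exists k, IZR k < f 0 < IZR k + 1 by apply: notint_k; apply: fni; lra.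
have f0 : f 0 = x b - x a by rewrite /f g0.
exists k; split; first by rewrite -f0.
case: (Rlt_le_dec (f 1) (IZR k + 1)) => H1.
  case: (Rle_lt_dec (f 1) (IZR k)) => H2; last by [].
  case: H2 => H2.
    have [z [[z0 z1] fz]] := IVT (fun t => IZR k - f t) 0 1
      ltac:(apply: continuity_minus; [reg|exact: fc]) Rlt_0_1 ltac:(lra) ltac:(lra).
    exfalso; apply: (fni z z0 z1); exists k; lra.
  exfalso; apply: (fni 1 ltac:(lra) ltac:(lra)); by exists k.
case: H1 => H1.
  have [z [[z0 z1] fz]] := IVT (fun t => f t - (IZR k + 1)) 0 1
    ltac:(apply: continuity_minus; [exact: fc|reg]) Rlt_0_1 ltac:(lra) ltac:(lra).
  exfalso; apply: (fni z z0 z1); exists (k + 1)%Z; rewrite plus_IZR; lra.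
exfalso; apply: (fni 1 ltac:(lra) ltac:(lra)); exists (k+1)%Z; rewrite plus_IZR; lra.
Qed.

Lemma SC_iff (h : rel 'I_n) x y : same_chamber h x y <-> Inv h x y.
Proof. split; [exact: SC_le | exact: SC_ge]. Qed.

Lemma Inv_trans (h : rel 'I_n) x y p : Inv h x y -> Inv h y p -> Inv h x p.
Proof.
move=> [c1 H1] [c2 H2]; exists (fun k => c1 k + c2 k)%Z => a b hab.
apply: (samek_trans (H1 a b hab)).
have := samek_shift2 (c1 b - c1 a)%Z (H2 a b hab).
rewrite /shiftz !plus_IZR ?minus_IZR ?opp_IZR; apply: samek_ext; ring.
Qed.

End SC.

Lemma div_lt1 x d : 0 < d -> x < d -> x / d < 1.
Proof.
move=> d0 xd; apply: (Rmult_lt_reg_r d) => //; rewrite /Rdiv Rmult_assoc Rinv_l; lra.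
Qed.

Section Chamber.
Variable n : nat.
Definition valid (o : rel 'I_n) (z : 'I_n -> R) := forall a b, o a b -> 0 < z b - z a < 1.
Definition Cz (o : rel 'I_n) y := exists c, valid o (shiftz y c).

Lemma conn_mono (o : rel 'I_n) z : (forall a b, o a b -> z a < z b) ->
  forall a b, connect o a b -> z a <= z b.
Proof.
move=> H a b /connectP [p pp ->]; elim: p a pp => [|u p IH] a /=; first lra.
move=> /andP [oau pu] /=; have := H _ _ oau; have := IH u pu; move=> h1 h2; apply: Rle_trans (Rlt_le _ _ h2) h1.
Qed.

Lemma plt_mono (o : rel 'I_n) z : (forall a b, o a b -> z a < z b) ->
  forall a b, plt o a b -> z a < z b.
Proof. move=> H a b [k [oak ckb]]; have := H _ _ oak; have := conn_mono H ckb; lra. Qed.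

Lemma valid_acyc (o : rel 'I_n) z : valid o z -> forall a, ~ plt o a a.
Proof.
move=> V a P; have := plt_mono (z:=z) _ P; (have: forall a b, o a b -> z a < z b by move=> u v /V; lra); move=> H /(_ H); lra.
Qed.

Variable o : rel 'I_n.
Hypothesis acyc : forall i, ~ plt o i i.

Definition hp (A : {set 'I_n}) (k : 'I_n) : R := INR (hgt o A k) / INR n.+1.

Lemma INRn1 : 0 < INR n.+1.
Proof. apply: lt_0_INR; apply/ltP; done. Qed.

Lemma hp_bounds (A : {set 'I_n}) k : 0 < hp A k < 1.
Proof.
rewrite /hp; have h1 := hgt_pos o A k; have h2 := hgt_le o A k.
have := INRn1; move=> Hn.
have a1 : 1 <= INR (hgt o A k) by apply: (le_INR 1); apply/leP.
have a2 : INR (hgt o A k) <= INR n by apply: le_INR; apply/leP.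
rewrite S_INR in Hn *; split.
  apply: Rdiv_lt_0_compat; lra.
apply: div_lt1; lra.
Qed.

Lemma hp_mono (A : {set 'I_n}) : (forall t s, t \in A -> s \in A -> ~ plt o t s) ->
  forall u v, o u v -> hp A u < hp A v.
Proof.
move=> anti u v ouv; have h := hgt_mono acyc anti ouv; rewrite /hp.
apply: Rmult_lt_compat_r; first by apply: Rinv_0_lt_compat; exact: INRn1.
apply: lt_INR; apply/ltP; exact: h.
Qed.

Lemma hp_valid (A : {set 'I_n}) : (forall t s, t \in A -> s \in A -> ~ plt o t s) -> valid o (hp A).
Proof.
move=> anti a b oab; have := hp_mono anti oab; have := hp_bounds A a; have := hp_bounds A b; lra.
Qed.

Lemma anti0 : forall t s, t \in (set0 : {set 'I_n}) -> s \in set0 -> ~ plt o t s.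
Proof. by move=> t s; rewrite inE. Qed.

Variable G : rel 'I_n.
Hypothesis sG : simple_graph G.
Hypothesis oG : orientation G o.

Lemma chamber_le y : toric_chamber G o y -> Cz o y.
Proof.
move=> [x [xb [xoff [xc /SC_le [c Hc]]]]]; exists c => a b oab.
have Gab : G a b by case: oG => H _; exact: H.
have [k [[h1 h2] [h3 h4]]] := Hc a b Gab.
have xab := (proj1 (xc a b Gab) oab); have := xb a; have := xb b => hb ha.
have k0 : k = 0%Z.
  have e1 : IZR k < IZR 1 by rewrite /=; lra.
  have e2 : IZR (-1) < IZR k by rewrite /=; lra.
  apply lt_IZR in e1; apply lt_IZR in e2; lia.
subst k; move: h3 h4; rewrite /=; lra.
Qed.

Lemma Cz_same y : Cz o y -> same_chamber G (hp set0) y.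
Proof.
move=> [c V]; apply: SC_ge; exists c => a b Gab.
have V0 := hp_valid anti0.
case: oG => _ [H _]; have /orP [oab|oba] := H a b Gab.
  exists 0%Z; have := V0 a b oab; have := V a b oab; rewrite /=; repeat split; lra.
exists (-1)%Z; have := V0 b a oba; have := V b a oba; rewrite /=; repeat split; lra.
Qed.

Lemma hp_off : off_arr G (hp set0).
Proof.
have V0 := hp_valid anti0.
move=> a b Gab; rewrite /on_hyp.
case: oG => _ [H _]; have /orP [oab|oba] := H a b Gab.
  have := V0 a b oab => h; apply: (notint (k := (-1)%Z)); rewrite /=; lra.
have := V0 b a oba => h; apply: (notint (k := 0%Z)); rewrite /=; lra.
Qed.

Lemma hp_compat : forall i j, G i j -> (o i j <-> hp set0 i < hp set0 j).
Proof.
move=> i j Gij; split; first exact: (@hp_mono set0 anti0 i j).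
move=> h; case: oG => _ [H _]; have /orP [//|oji] := H i j Gij.
have := @hp_mono set0 anti0 j i oji; lra.
Qed.

Lemma chamber_ge y : Cz o y -> toric_chamber G o y.
Proof.
move=> Cy; exists (hp set0); split; last split; last split.
- move=> i; have := hp_bounds set0 i; lra.
- exact: hp_off.
- exact: hp_compat.
- exact: Cz_same.
Qed.

Lemma chamber_iff y : toric_chamber G o y <-> Cz o y.
Proof. split; [exact: chamber_le | exact: chamber_ge]. Qed.

Lemma is_chamber_G : is_chamber G (toric_chamber G o).
Proof.
exists (hp set0); split; first exact: hp_off.
move=> y; split; first by move=> /chamber_le; exact: Cz_same.
move=> S; exists (hp set0); split; last split; last split => //.
- move=> i; have := hp_bounds set0 i; lra.
- exact: hp_off.
- exact: hp_compat.
Qed.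

End Chamber.

Section Flip.
Variable n : nat.
Variable G : rel 'I_n.
Hypothesis sG : simple_graph G.

Definition Rltb (r s : R) : bool := if Rlt_dec r s then true else false.
Lemma RltbP r s : Rltb r s = true <-> r < s.
Proof. by rewrite /Rltb; case: Rlt_dec. Qed.

Definition orel (z : 'I_n -> R) : rel 'I_n := fun a b => G a b && Rltb (z a) (z b).
Definition wvalid (z : 'I_n -> R) := forall a b, G a b -> (0 < z b - z a < 1) \/ (0 < z a - z b < 1).

Definition upd (z : 'I_n -> R) v r := fun k => if k == v then r else z k.

Lemma flip_step z v : wvalid z -> (forall u, G v u -> z u < z v) ->
  wvalid (upd z v (z v - 1)) /\ flip_source (orel (upd z v (z v - 1))) (orel z).
Proof.
move=> W S; case: sG => Gs Gi; split.
  move=> a b Gab; rewrite /upd /=.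
  case: (eqVneq a v) => [eav|av]; case: (eqVneq b v) => [ebv|bv]; try subst a; try subst b.
  - by rewrite Gi in Gab.
  - have := S b Gab; have := W v b Gab; lra.
  - rewrite Gs in Gab; have := S a Gab; have := W a v; rewrite Gs; move/(_ Gab); lra.
  - exact: W.
exists v; split.
  move=> u; rewrite /orel /upd eqxx; case: (eqVneq u v) => [uv|uv]; first by subst u; rewrite Gi.
  case Guv: (G u v) => //=; apply/negP => /RltbP.
  rewrite Gs in Guv; have := S u Guv; have := W v u Guv; lra.
move=> i j; rewrite /orel /upd.
case: (eqVneq i v) => [eiv|iv]; case: (eqVneq j v) => [ejv|jv]; try subst i; try subst j; rewrite ?eqxx ?orbT /=.
- by rewrite Gi.
- rewrite (Gs j v); case Gvj: (G v j) => //=.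
  have := S j Gvj; have := W v j Gvj => h1 h2; have h1' : z v - z j < 1 by case: h1 => h1; lra.
  have -> : Rltb (z v) (z j) = false by apply/negbTE/negP => /RltbP; lra.
  have -> : Rltb (z j) (z v - 1) = false by apply/negbTE/negP => /RltbP; lra.
  by [].
- rewrite (Gs v i); case Giv: (G i v) => //=.
  rewrite Gs in Giv; have := S i Giv; have := W v i Giv => h1 h2.
  have -> : Rltb (z i) (z v) = true by apply/RltbP.
  by symmetry; apply/RltbP; lra.
- by [].
Qed.

Lemma exists_max (P : pred 'I_n) (f : 'I_n -> R) : (exists k, P k) ->
  exists v, P v /\ forall k, P k -> f k <= f v.
Proof.
suff H : forall s : seq 'I_n, (exists k, k \in s /\ P k) ->
   exists v, P v /\ forall k, k \in s -> P k -> f k <= f v.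
  move=> [k Pk]; have [|v [Pv Hv]] := H (enum 'I_n); first by exists k; rewrite mem_enum.
  by exists v; split => // k' Pk'; apply: Hv; rewrite ?mem_enum.
elim=> [|a s IH] [k [ks Pk]]; first by rewrite in_nil in ks.
case Pa: (P a); last first.
  have [|v [Pv Hv]] := IH.
    exists k; split => //; move: ks; rewrite inE; case/orP => // /eqP e; by rewrite e Pa in Pk.
  exists v; split => // k' k's Pk'; move: k's; rewrite inE; case/orP => [/eqP e|]; last by move=> ks'; exact: Hv.
  by rewrite e Pa in Pk'.
case: (boolP [exists k, (k \in s) && P k]) => [/existsP [k' /andP [k's Pk']]|nE].
  have [|v [Pv Hv]] := IH; first by exists k'.
  case: (Rle_lt_dec (f a) (f v)) => fav.
    exists v; split => // k2; rewrite inE; case/orP => [/eqP ->|]//; exact: Hv.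
  exists a; split => // k2; rewrite inE; case/orP => [/eqP ->|k2s P2]; first lra.
  have := Hv _ k2s P2; lra.
exists a; split => // k2; rewrite inE; case/orP => [/eqP ->|k2s P2]; first lra.
exfalso; move/negP: nE; apply; apply/existsP; exists k2; by rewrite k2s.
Qed.

Definition subc (z : 'I_n -> R) (c : 'I_n -> nat) := fun k => z k - INR (c k).

Lemma flip_many N : forall z (c : 'I_n -> nat), (\sum_k c k <= N)%N -> wvalid z ->
  wvalid (subc z c) -> toric_equiv (orel z) (orel (subc z c)).
Proof.
elim: N => [|N IH] z c Hs Wz Wc.
  have e : subc z c = z.
    apply: functional_extensionality => k; rewrite /subc.
    have : (c k <= \sum_k c k)%N by rewrite (bigD1 k) //= leq_addr.
    move: Hs; rewrite leqn0 => /eqP -> ; rewrite leqn0 => /eqP ->; rewrite /=; ring.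
  rewrite e; exact: rst_refl.
case: (boolP [exists k, 0 < c k]%N) => [/existsP [k0 ck0]|nE]; last first.
  have e : subc z c = z.
    apply: functional_extensionality => k; rewrite /subc.
    have -> : c k = 0%N.
      apply/eqP; rewrite -leqn0 leqNgt; apply/negP => h; move/negP: nE; apply.
      by apply/existsP; exists k.
    rewrite /=; ring.
  rewrite e; exact: rst_refl.
have [v [cv Hv]] := @exists_max (fun k => 0 < c k)%N z (ex_intro _ k0 ck0).
have sink : forall u, G v u -> z u < z v.
  move=> u Gvu; case: (Rlt_le_dec (z u) (z v)) => // h; exfalso.
  case: (Wz v u Gvu) => h1; last lra.
  case: (posnP (c u)) => cu; last by have := Hv u cu; lra.
  case: (Wc v u Gvu); rewrite /subc cu /=.
    move=> [_ h2]; have: 1 <= INR (c v) by apply: (le_INR 1); apply/leP.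
    have := pos_INR (c v); lra.
  have := pos_INR (c v); lra.
have [W1 F1] := flip_step Wz sink.
set z1 := upd z v (z v - 1) in W1 F1.
set c1 := fun k => if k == v then (c v).-1 else c k.
have e1 : subc z1 c1 = subc z c.
  apply: functional_extensionality => k; rewrite /subc /z1 /c1 /upd.
  case: (eqVneq k v) => [->|//].
  have -> : c v = (c v).-1.+1 by rewrite prednK.
  rewrite S_INR /=; ring.
have s1 : (\sum_k c1 k <= N)%N.
  rewrite (bigD1 v) //= in Hs; rewrite (bigD1 v) //= /c1 eqxx.
  have -> : (\sum_(i < n | i != v) (if i == v then (c v).-1 else c i) = \sum_(i < n | i != v) c i)%N.
    by apply: eq_bigr => i /negbTE ->.
  by move: Hs; rewrite -(prednK cv) addSn ltnS.
have := IH z1 c1 s1 W1; rewrite e1 => /(_ Wc) H1.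
apply: rst_trans H1; apply: rst_sym; exact: rst_step.
Qed.

Lemma orel_shift z r : orel (fun k => z k + r) = orel z.
Proof.
apply: functional_extensionality => a; apply: functional_extensionality => b.
rewrite /orel; congr (_ && _); rewrite /Rltb.
case: Rlt_dec => h1; case: Rlt_dec => h2 //; lra.
Qed.

Lemma upper_bound (c : 'I_n -> Z) : exists M, forall k, (c k <= M)%Z.
Proof.
suff H : forall s : seq 'I_n, exists M, forall k, k \in s -> (c k <= M)%Z.
  have [M HM] := H (enum 'I_n); exists M => k; apply: HM; by rewrite mem_enum.
elim=> [|a s [M HM]]; first by exists 0%Z.
exists (Z.max M (c a)) => k; rewrite inE; case/orP => [/eqP ->|ks]; first lia.
have := HM k ks; lia.
Qed.

Lemma equiv_shift z (c : 'I_n -> Z) : wvalid z -> wvalid (shiftz z c) ->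
  toric_equiv (orel z) (orel (shiftz z c)).
Proof.
move=> Wz Wc; have [M HM] := upper_bound c.
set z2 := fun k => z k + IZR M.
set d := fun k => Z.to_nat (M - c k).
have e : subc z2 d = shiftz z c.
  apply: functional_extensionality => k; rewrite /subc /z2 /d /shiftz INR_IZR_INZ Z2Nat.id.
    rewrite minus_IZR; ring.
  have := HM k; lia.
have W2 : wvalid z2 by move=> a b /Wz; rewrite /z2; lra.
have := @flip_many (\sum_k d k) z2 d (leqnn _) W2; rewrite e => /(_ Wc).
by rewrite /z2 orel_shift.
Qed.

End Flip.

Section Inv.
Variable n : nat.
Variable G : rel 'I_n.
Hypothesis sG : simple_graph G.

Lemma Cz_of_valid (o : rel 'I_n) y : valid o y -> Cz o y.
Proof.
move=> V; exists (fun _ => 0%Z) => a b oab; rewrite /shiftz /=.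
have := V a b oab; lra.
Qed.

Lemma flip_Cz (o1 o2 : rel 'I_n) y : flip_source o1 o2 -> (Cz o1 y <-> Cz o2 y).
Proof.
move=> [v [src F]]; split.
  move=> [c V]; exists (fun k => if k == v then (c k + 1)%Z else c k) => a b.
  rewrite F /shiftz.
  case: (eqVneq a v) => [eav|av]; case: (eqVneq b v) => [ebv|bv]; try subst a; try subst b;
    rewrite ?eqxx /= ?src //.
  - move=> /V; rewrite /shiftz plus_IZR; lra.
  - by move=> /V.
move=> [c V]; exists (fun k => if k == v then (c k - 1)%Z else c k) => a b.
have F' : forall a b, o1 a b = if (a == v) || (b == v) then o2 b a else o2 a b.
  move=> a' b'; rewrite !F; case: (a' == v); case: (b' == v) => //=.
rewrite F' /shiftz.
case: (eqVneq a v) => [eav|av]; case: (eqVneq b v) => [ebv|bv]; try subst a; try subst b;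
  rewrite ?eqxx /=.
- by rewrite F eqxx /= src.
- move=> /V; rewrite /shiftz minus_IZR; lra.
- by rewrite F eqxx /= src.
- by move=> /V.
Qed.

Lemma orient_transfer (o1 o2 : rel 'I_n) (P : 'I_n -> 'I_n -> bool) :
  (forall a b, P a b = P b a) ->
  (forall a b, o2 a b = if P a b then o1 b a else o1 a b) ->
  orientation G o1 -> orientation G o2.
Proof.
case: sG => Gs _ Ps F [O1 [O2 O3]]; split; [|split].
- move=> a b; rewrite F; case: (P a b) => // /O1; by rewrite Gs.
- move=> a b /O2; rewrite !F Ps; case: (P b a) => //; by rewrite orbC.
- move=> a b; rewrite !F Ps; case: (P b a) => //; rewrite andbC; exact: O3.
Qed.

Lemma flip_orient (o1 o2 : rel 'I_n) : flip_source o1 o2 ->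
  (orientation G o1 <-> orientation G o2).
Proof.
move=> [v [src F]]; split.
  apply: (orient_transfer (P := fun a b => (a == v) || (b == v))) => // a b; exact: orbC.
apply: (orient_transfer (P := fun a b => (a == v) || (b == v))) => [a b|a b]; first exact: orbC.
rewrite !F; case: (a == v); case: (b == v) => //=.
Qed.

Lemma equiv_inv (o1 o2 : rel 'I_n) : toric_equiv o1 o2 ->
  (forall y, Cz o1 y <-> Cz o2 y) /\ (orientation G o1 <-> orientation G o2).
Proof.
elim => {o1 o2}.
- move=> o1 o2 F; split; [move=> y; exact: flip_Cz | exact: flip_orient].
- by [].
- move=> o1 o2 _ [H1 H2]; split; [move=> y; by rewrite H1 | by rewrite H2].
- move=> o1 o2 o3 _ [H1 H2] _ [H3 H4]; split; [move=> y; by rewrite H1 H3 | by rewrite H2 H4].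
Qed.

Lemma orel_eq (o : rel 'I_n) z : orientation G o -> valid o z -> orel G z = o.
Proof.
move=> [O1 [O2 O3]] V; apply: functional_extensionality => a; apply: functional_extensionality => b.
rewrite /orel; case oab: (o a b).
  rewrite (O1 _ _ oab) /=; apply/RltbP; have := V a b oab; lra.
case Gab: (G a b) => //=; have := O2 a b Gab; rewrite oab /= => oba.
apply/negbTE/negP => /RltbP; have := V b a oba; lra.
Qed.

Definition fl (r : R) : Z := (up r - 1)%Z.
Lemma fl_spec r : IZR (fl r) <= r < IZR (fl r) + 1.
Proof. have [h1 h2] := archimed r; rewrite /fl minus_IZR; lra. Qed.

Variable o : rel 'I_n.
Hypothesis ao : acyclic_orientation G o.

Lemma part3_ge i j : (forall o', toric_equiv o o' -> comp_edge o' i j) -> tor_closure_edge G o i j.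
Proof.
case: ao => oG acyc Hall.
case Gij: (G i j); first by left.
right; split.
  apply/negP => /eqP e; subst j; case: (Hall o (rst_refl _ _ _)) => /acyc //.
move=> y /(chamber_le oG) [c V] hyp.
set z := shiftz y c in V.
set w := shiftz z (fun k => (- fl (z k))%Z).
have wb : forall k, 0 <= w k < 1.
  move=> k; rewrite /w /shiftz opp_IZR; have := fl_spec (z k); lra.
have Wz : wvalid G z.
  move=> a b Gab; case: oG => _ [O2 _]; case/orP: (O2 a b Gab) => h; [left|right]; exact: V.
have Ww : wvalid G w.
  move=> a b Gab.
  have nz : w b - w a <> 0.
    move=> e; case: oG => _ [O2 _]; case/orP: (O2 a b Gab) => h; have := V _ _ h.
      move=> hh; apply: (notint (k := 0%Z) (r := z b - z a)); first by rewrite /=; lra.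
      exists (fl (z b) - fl (z a))%Z; rewrite minus_IZR.
      move: e; rewrite /w /shiftz !opp_IZR; lra.
    move=> hh; apply: (notint (k := 0%Z) (r := z a - z b)); first by rewrite /=; lra.
    exists (fl (z a) - fl (z b))%Z; rewrite minus_IZR.
    move: e; rewrite /w /shiftz !opp_IZR; lra.
  have := wb a; have := wb b => h1 h2.
  case: (Rlt_le_dec 0 (w b - w a)) => h; [left|right]; lra.
have E := equiv_shift sG Wz Ww.
rewrite (orel_eq oG V) in E.
have [P|P] := Hall _ E.
  have := plt_mono (o := orel G w) (z := w) _ P.
  have wi : w i = w j.
    apply: Rminus_diag_uniq; apply: int_small.
      move: hyp => [m hm].
      exists (m + c i - c j - (fl (z i) - fl (z j)))%Z.
      rewrite /w /z /shiftz !minus_IZR !plus_IZR !opp_IZR in hm *.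
      rewrite /shiftz in hm; rewrite /fl ?minus_IZR; lra.
    have := wb i; have := wb j; lra.
  rewrite wi; move=> H; have := H (fun a b h => proj1 (RltbP _ _) (proj2 (andP h))); lra.
have := plt_mono (o := orel G w) (z := w) _ P.
have wi : w i = w j.
  apply: Rminus_diag_uniq; apply: int_small.
    move: hyp => [m hm].
    exists (m + c i - c j - (fl (z i) - fl (z j)))%Z.
    rewrite /w /z /shiftz !minus_IZR !plus_IZR !opp_IZR in hm *.
    rewrite /shiftz in hm; rewrite /fl ?minus_IZR; lra.
  have := wb i; have := wb j; lra.
rewrite wi; move=> H; have := H (fun a b h => proj1 (RltbP _ _) (proj2 (andP h))); lra.
Qed.

Lemma part3_le i j : tor_closure_edge G o i j -> forall o', toric_equiv o o' -> comp_edge o' i j.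
Proof.
case: ao => oG acyc TC o' E; have [CI OI] := equiv_inv E.
have oG' : orientation G o' by rewrite -OI.
case: TC => [Gij|[ij NH]].
  case: oG' => _ [O2 _]; case/orP: (O2 i j Gij) => h; [left|right]; exact: o_plt.
case: (classic (comp_edge o' i j)) => // nc; exfalso.
have C0 : Cz o (hp o set0) by apply: Cz_of_valid; exact: (@hp_valid n o acyc set0 (@anti0 n o)).
have [c V'] := proj1 (CI _) C0.
have acyc' := valid_acyc V'.
set A := [set i; j].
have anti : forall t s, t \in A -> s \in A -> ~ plt o' t s.
  move=> t s; rewrite !inE => /orP [] /eqP -> /orP [] /eqP -> P.
  - exact: acyc' P.
  - by apply: nc; left.
  - by apply: nc; right.
  - exact: acyc' P.
have Vy := hp_valid acyc' anti.
have Cy : Cz o (hp o' A) by rewrite CI; exact: Cz_of_valid.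
have Ty := chamber_ge acyc oG Cy.
apply: (NH _ Ty); exists 0%Z.
rewrite /hp (hgt_eqA o' (i := i) (j := j)) ?inE ?eqxx ?orbT //=; ring.
Qed.

End Inv.

Lemma samek_pos d e : 0 < d < 1 -> 0 < e < 1 -> samek d e.
Proof. move=> h1 h2; exists 0%Z; rewrite /=; lra. Qed.
Lemma samek_neg d e : -1 < d < 0 -> -1 < e < 0 -> samek d e.
Proof. move=> h1 h2; exists (-1)%Z; rewrite /=; lra. Qed.

Section Part1.
Variable n : nat.
Variables G o K : rel 'I_n.
Hypothesis sG : simple_graph G.
Hypothesis ao : acyclic_orientation G o.
Hypothesis TH : is_tor_hasse G o K.

Lemma K_sub_G i j : K i j -> G i j.
Proof.
case: ao => oG acyc; case: TH => sK HK.
have [KG _] := proj1 (HK G sG) (is_chamber_G acyc oG).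
exact: KG.
Qed.

Lemma part1 i j : covers o i j -> K i j.
Proof.
case: ao => oG acyc; case: (TH) => sK HK.
case => P NC; case Kij: (K i j) => //; exfalso.
have ij : i != j by apply/negP => /eqP e; subst j; exact: acyc P.
have oij : o i j.
  case: P => k [oik ckj]; case: (eqVneq k j) => [e|kj]; first by subst k.
  exfalso; apply: NC; exists k; split; [exact: o_plt | exact: conn_neq_plt].
have cij : connect o i j := connect1 oij.
have Gij : G i j by case: oG => O1 _; exact: O1.
set lev := fun k => if ~~ connect o i k then 0%N else if k == i then 1%N else if k == j then 2%N else 3%N.
set r := fun k => INR (lev k * n.+1 + hgt o set0 k) / INR (4 * n.+1).
have N0 : 0 < INR (4 * n.+1) by apply: lt_0_INR; apply/ltP; rewrite muln_gt0.
have rlt : forall a b, (lev a * n.+1 + hgt o set0 a < lev b * n.+1 + hgt o set0 b)%N -> r a < r b.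
  move=> a b h; rewrite /r; apply: Rmult_lt_compat_r; first exact: Rinv_0_lt_compat.
  apply: lt_INR; apply/ltP; exact: h.
have rlev : forall a b, (lev a < lev b)%N -> r a < r b.
  move=> a b h; apply: rlt.
  have h1 := hgt_le o set0 a; have h2 := hgt_pos o set0 b.
  apply: (@leq_trans (lev a * n.+1 + n.+1)%N); first by rewrite ltn_add2l ltnS.
  apply: (@leq_trans (lev b * n.+1)%N); last exact: leq_addr.
  by rewrite -mulSnr leq_mul2r h orbT.
have rb : forall k, 0 < r k < 1.
  move=> k; rewrite /r; split; first by apply: Rdiv_lt_0_compat => //; apply: lt_0_INR; apply/ltP; rewrite addn_gt0 hgt_pos orbT.
  apply: div_lt1 => //; apply: lt_INR; apply/ltP.
  have h1 := hgt_le o set0 k.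
  have : (lev k <= 3)%N by rewrite /lev; case: (connect o i k); case: (k == i); case: (k == j).
  move=> h2; apply: (@leq_trans (3 * n.+1 + n.+1)%N).
    rewrite addnS ltnS; apply: leq_add => //; by rewrite leq_mul2r h2 orbT.
  by rewrite -mulSnr.
have levi : lev i = 1%N by rewrite /lev connect0 eqxx.
have levj : lev j = 2%N by rewrite /lev cij eq_sym (negbTE ij) eqxx.
have lev03 : forall k, k != i -> k != j -> lev k = 0%N \/ lev k = 3%N.
  move=> k ki kj; rewrite /lev (negbTE ki) (negbTE kj); case: (connect o i k); by [right|left].
have levmono : forall u v, o u v -> (lev u <= lev v)%N.
  move=> u v ouv; rewrite /lev; case cu: (connect o i u) => //=.
  have -> : connect o i v by exact: connect_trans cu (connect1 ouv).
  rewrite /=; case: (eqVneq u i) => [eui|ui].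
    subst u; case: (eqVneq v i) => [evi|vi]; first by subst v; exfalso; apply: (acyc i); exact: o_plt.
    by case: (v == j).
  case: (eqVneq u j) => [euj|uj].
    subst u; case: (eqVneq v i) => [evi|vi].
      subst v; exfalso; apply: (acyc i); exists j; split => //; exact: connect1.
    case: (eqVneq v j) => [evj|vj] //; subst v; exfalso; apply: (acyc j); exact: o_plt.
  case: (eqVneq v i) => [evi|vi].
    subst v; exfalso; apply: (acyc u); exists i; by split.
  case: (eqVneq v j) => [evj|vj] //; subst v; exfalso; apply: NC; exists u; split.
    by apply: conn_neq_plt cu _; rewrite eq_sym.
  exact: o_plt.
have rmono : forall u v, o u v -> r u < r v.
  move=> u v ouv; apply: rlt; apply: (@leq_trans (lev u * n.+1 + hgt o set0 v)%N).
    rewrite ltn_add2l; exact: (@hgt_mono n o acyc set0 u v (@anti0 n o) ouv).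
  by rewrite leq_add2r leq_mul2r levmono ?orbT.
have V : valid o r by move=> a b oab; have := rmono a b oab; have := rb a; have := rb b; lra.
have Tr : toric_chamber G o r by apply: (chamber_ge acyc oG); exact: Cz_of_valid.
set H := fun a b => G a b && ~~ (((a == i) && (b == j)) || ((a == j) && (b == i))).
have sH : simple_graph H.
  case: sG => Gs Gi; split => [a b|a]; rewrite /H; first by rewrite Gs; case: (b == i); case: (b == j); case: (a == i); case: (a == j).
  by rewrite Gi.
have KH : forall a b, K a b -> H a b.
  move=> a b Kab; rewrite /H (K_sub_G Kab) /=; apply/negP => /orP [] /andP [/eqP ea /eqP eb]; subst a b.
    by rewrite Kab in Kij.
  case: sK => Ks _; by rewrite Ks Kab in Kij.
have HT : forall a b, H a b -> tor_closure_edge G o a b by move=> a b /andP [Gab _]; left.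
have [xH [_ Hc]] := proj2 (HK H sH) (conj KH HT).
set q := fun k => if k == j then r i else r k.
have Sq : same_chamber H r q.
  apply: SC_ge; exists (fun _ => 0%Z) => a b /andP [Gab nij]; rewrite /shiftz /q /=.
  case: (eqVneq a j) => [eaj|aj]; case: (eqVneq b j) => [ebj|bj]; try subst a; try subst b.
  - by case: sG => _ Gi; rewrite Gi in Gab.
  - have bi : b != i by apply/negP => /eqP e; subst b; rewrite !eqxx orbT in nij.
    have ri := rb i; have rj := rb j; have rbb := rb b.
    have rij : r i < r j by apply: rlev; rewrite levi levj.
    case: (lev03 b bi bj) => lb.
      have : r b < r i by apply: rlev; rewrite lb levi.
      move=> h; apply: samek_neg; lra.
    have : r j < r b by apply: rlev; rewrite lb levj.
    move=> h; apply: samek_pos; lra.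
  - have ai : a != i by apply/negP => /eqP e; subst a; rewrite !eqxx in nij.
    have ri := rb i; have rj := rb j; have raa := rb a.
    have rij : r i < r j by apply: rlev; rewrite levi levj.
    rewrite ?eqxx ?(negbTE ai).
    case: (lev03 a ai aj) => la.
      have : r a < r i by apply: rlev; rewrite la levi.
      move=> h; apply: samek_pos; lra.
    have : r j < r a by apply: rlev; rewrite la levj.
    move=> h; apply: samek_neg; lra.
  - rewrite ?(negbTE aj) ?(negbTE bj); have ra := rb a; have rbb := rb b.
    case: oG => _ [O2 _]; case/orP: (O2 a b Gab) => h.
      have := rmono a b h => hh; apply: samek_pos; lra.
    have := rmono b a h => hh; apply: samek_neg; lra.
have Sx : same_chamber H xH r by rewrite -Hc.
have Sxq : same_chamber H xH q by apply: SC_ge; apply: (Inv_trans (SC_le Sx)); exact: SC_le.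
have /(chamber_le oG) [c Vq] : toric_chamber G o q by rewrite Hc.
have := Vq i j oij; rewrite /shiftz /q eqxx (negbTE ij) => h.
apply: (notint (k := 0%Z) (r := IZR (c j) - IZR (c i))); first by rewrite /=; lra.
by exists (c j - c i)%Z; rewrite minus_IZR.
Qed.

End Part1.

Theorem mainTheorem8 (n : nat) (G o K : rel 'I_n) :
  simple_graph G -> acyclic_orientation G o -> is_tor_hasse G o K ->
  (forall i j, hasse_edge o i j -> K i j) /\
  (forall i j, K i j -> tor_closure_edge G o i j) /\
  (forall i j, tor_closure_edge G o i j <->
     (forall o', toric_equiv o o' -> comp_edge o' i j)).
Proof.
move=> sG ao TH; split; [|split].
- move=> i j [C|C]; first exact: (part1 sG ao TH C).
  have [[Ks _] _] := TH; rewrite Ks; exact: (part1 sG ao TH C).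
- move=> i j Kij; left; exact: (K_sub_G sG ao TH Kij).
- move=> i j; split; [exact: part3_le | exact: part3_ge].
Qed.
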